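(* Let $(H,\leq,\ast)$ be a discrete $\omega$-dimensional poc-set and let $\Sigma\in\Re H$ have finite codimension $\delta>0$. Then there exists $\Sigma_1\in\Re H$ with $\Sigma_1<\Sigma$ and $\operatorname{codim}(\Sigma_1)=\delta-1$.
   Context: Poc-set: poset with minimum $0$ and order-reversing involution $\ast$ with $h\le h^\ast\Rightarrow h=0$. Discrete: intervals between proper elements finite. Transverse: none of $h\le k,h^\ast\le k,h\le k^\ast,h^\ast\le k^\ast$; $\omega$-dimensional: no infinite transverse subset. Ultrafilter: $\alpha\subseteq H$ with exactly one of $h,h^\ast$ in $\alpha$ for each $h$, no $h,k\in\alpha$ with $h\le k^\ast$; $H^\circ$ with topology from $2^H$. Almost-equality: finite difference. $\Re H$ is the set of almost-equality classes, partially ordered by $\Sigma_1\ge\Sigma_2$ iff $\Sigma_1\cap\overline{\Sigma_2}\ne\varnothing$ (closure in $H^\circ$). For chains $c=(c_n)$, $d=(d_m)$ (infinite strictly descending), $c$ dominates $d$ if for every $m$ there is $n$ with $c_n\le d_m$; $c\sim d$ if each dominates the other. The codimension of $\Sigma$ is the cardinality of the set of $\sim$-classes of infinite strictly descending chains contained in $\xi$, for any $\xi\in\Sigma$ (this is independent of $\xi$). *)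

(* Defs.v *)
From Stdlib Require Import List Arith.
Import ListNotations.

Record PocSet := {
  carrier :> Type;
  le : carrier -> carrier -> Prop;
  zero : carrier;
  star : carrier -> carrier;
  le_refl : forall h, le h h;
  le_trans : forall h k l, le h k -> le k l -> le h l;
  le_antisym : forall h k, le h k -> le k h -> h = k;
  zero_min : forall h, le zero h;
  star_invol : forall h, star (star h) = h;
  star_rev : forall h k, le h k -> le (star k) (star h);
  star_nonself : forall h, le h (star h) -> h = zero
}.

Arguments le {p} _ _.
Arguments zero {p}.
Arguments star {p} _.

Section Defs.
Variable H : PocSet.

Definition finite_set (S : H -> Prop) : Prop :=
  exists l : list H, forall x, S x -> In x l.

Definition proper (h : H) : Prop := h <> zero /\ h <> star zero.

Definition discrete : Prop :=
  forall h k : H, proper h -> proper k ->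
    finite_set (fun x => le h x /\ le x k).

Definition transverse (h k : H) : Prop :=
  ~ le h k /\ ~ le (star h) k /\ ~ le h (star k) /\ ~ le (star h) (star k).

Definition transverse_set (S : H -> Prop) : Prop :=
  forall h k, S h -> S k -> h <> k -> transverse h k.

Definition omega_dimensional : Prop :=
  forall S : H -> Prop, transverse_set S -> finite_set S.

Definition ultrafilter (a : H -> Prop) : Prop :=
  (forall h, (a h /\ ~ a (star h)) \/ (~ a h /\ a (star h))) /\
  (forall h k, a h -> a k -> ~ le h (star k)).

Definition almost_equal (a b : H -> Prop) : Prop :=
  finite_set (fun h => (a h /\ ~ b h) \/ (b h /\ ~ a h)).

Definition uclass (xi : H -> Prop) : (H -> Prop) -> Prop :=
  fun eta => ultrafilter eta /\ almost_equal eta xi.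

(* closure in H° (subspace of 2^H with the product topology): every basic
   neighbourhood {eta | eta agrees with xi on the finite set F} meets S *)
Definition closure (S : (H -> Prop) -> Prop) (xi : H -> Prop) : Prop :=
  ultrafilter xi /\
  forall F : list H, exists eta, S eta /\ forall h, In h F -> (eta h <-> xi h).

(* order on Re H: S1 >= S2 iff S1 meets the closure of S2 *)
Definition re_le (S2 S1 : (H -> Prop) -> Prop) : Prop :=
  exists eta, S1 eta /\ closure S2 eta.

Definition same_set (S1 S2 : (H -> Prop) -> Prop) : Prop :=
  forall eta, S1 eta <-> S2 eta.

Definition re_lt (S2 S1 : (H -> Prop) -> Prop) : Prop :=
  re_le S2 S1 /\ ~ same_set S2 S1.

Definition lt (h k : H) : Prop := le h k /\ h <> k.

Definition desc_chain_in (xi : H -> Prop) (c : nat -> H) : Prop :=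
  (forall n, lt (c (S n)) (c n)) /\ (forall n, xi (c n)).

Definition dominates (c d : nat -> H) : Prop :=
  forall m, exists n, le (c n) (d m).

Definition chain_equiv (c d : nat -> H) : Prop :=
  dominates c d /\ dominates d c.

(* the set of ~-classes of infinite strictly descending chains contained
   in xi has exactly n elements: n pairwise inequivalent representatives
   such that every chain is equivalent to one of them *)
Definition codim (xi : H -> Prop) (n : nat) : Prop :=
  exists reps : nat -> nat -> H,
    (forall i, i < n -> desc_chain_in xi (reps i)) /\
    (forall i j, i < n -> j < n -> i <> j -> ~ chain_equiv (reps i) (reps j)) /\
    (forall c, desc_chain_in xi c -> exists i, i < n /\ chain_equiv c (reps i)).

End Defs.

(* Main.v *)
Require Import Defs.
From Stdlib Require Import List Arith.
From Stdlib Require Import Classical Lia FinFun.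
Import ListNotations.

Section Proof.
Variable H : PocSet.

Lemma le_top (h : H) : le h (star zero).
Proof. rewrite <- (star_invol H h) at 1. apply star_rev. apply zero_min. Qed.

Lemma chain_le (c : nat -> H) : (forall n, lt H (c (S n)) (c n)) ->
  forall i k, le (c (k + i)) (c i).
Proof.
  intros Hc i k; induction k; simpl. apply le_refl.
  eapply le_trans; [apply (proj1 (Hc (k+i)))|exact IHk].
Qed.

Lemma chain_mono (c : nat -> H) : (forall n, lt H (c (S n)) (c n)) ->
  forall i j, i <= j -> le (c j) (c i).
Proof. intros Hc i j Hij. replace j with ((j - i) + i) by lia. apply chain_le; auto. Qed.

Lemma chain_inj (c : nat -> H) : (forall n, lt H (c (S n)) (c n)) ->
  forall i j, c i = c j -> i = j.
Proof.
  intros Hc.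
  assert (Hlt: forall i j, i < j -> c j <> c i).
  { intros i j Hij E.
    assert (H1 : le (c j) (c (S i))) by (apply chain_mono; auto).
    destruct (Hc i) as [H2 H3]. apply H3. apply le_antisym. exact H2.
    rewrite E in H1. exact H1. }
  intros i j E. destruct (lt_eq_lt_dec i j) as [[h|h]|h]; auto.
  - exfalso. apply (Hlt i j h). auto.
  - exfalso; apply (Hlt j i h); auto.
Qed.

Lemma chain_not_in_list (c : nat -> H) l : (forall n, lt H (c (S n)) (c n)) ->
  (forall n, In (c n) l) -> False.
Proof.
  intros Hc Hl.
  assert (ND: NoDup (map c (seq 0 (S (length l))))).
  { apply FinFun.Injective_map_NoDup. intros i j; apply (chain_inj c Hc). apply seq_NoDup. }
  apply NoDup_incl_length with (l' := l) in ND.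
  - rewrite length_map, length_seq in ND. lia.
  - intros x Hx. apply in_map_iff in Hx. destruct Hx as [n [<- _]]. apply Hl.
Qed.

Lemma uf_notzero xi : ultrafilter H xi -> ~ xi zero.
Proof. intros [_ U] Z. apply (U zero zero Z Z). apply zero_min. Qed.

Lemma uf_star xi h : ultrafilter H xi -> xi h -> ~ xi (star h).
Proof. intros [U _] Hh. destruct (U h); tauto. Qed.

Lemma uf_star' xi h : ultrafilter H xi -> ~ xi h -> xi (star h).
Proof. intros [U _] Hh. destruct (U h); tauto. Qed.

Lemma proper_below xi (c : nat -> H) n a : ultrafilter H xi ->
  (forall n, lt H (c (S n)) (c n)) -> xi a -> le a (c (S n)) -> proper H a.
Proof.
  intros U Hc Ha Hle. split.
  - intro E; subst a. apply (uf_notzero xi U Ha).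
  - intro E; subst a. destruct (Hc n) as [H1 H2]. apply H2.
    apply le_antisym. exact H1. exact (le_trans H _ _ _ (le_top (c n)) Hle).
Qed.

Lemma nc_below xi (c : nat -> H) N h k : ultrafilter H xi ->
  (forall n, lt H (c (S n)) (c n)) -> (forall n, xi (c n)) ->
  le h (c (S N)) -> le k (c (S N)) -> ~ le (star h) k.
Proof.
  intros U Hc Xc Hh Hk Hle.
  assert (E: le (star (c (S N))) (star (star (c (S N))))).
  { rewrite star_invol. eapply le_trans; [apply star_rev; exact Hh|].
    eapply le_trans; [exact Hle|exact Hk]. }
  apply star_nonself in E.
  pose proof (proper_below xi c N (c (S N)) U Hc (Xc _) (le_refl H _)) as [P1 P2].
  apply P2. rewrite <- (star_invol H (c (S N))). rewrite E. reflexivity.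
Qed.

Definition flip (xi A : H -> Prop) : H -> Prop :=
  fun h => (xi h /\ ~ A h) \/ (xi (star h) /\ A (star h)).

Lemma flip_uf xi A : ultrafilter H xi -> (forall h, A h -> xi h) ->
  (forall g h, xi g -> le g h -> A h -> A g) ->
  (forall h k, A h -> A k -> ~ le (star h) k) -> ultrafilter H (flip xi A).
Proof.
  intros U Asub Adown Anc. pose proof U as [U1 U2]. split.
  - intro h. unfold flip. rewrite (star_invol H h).
    destruct (U1 h) as [[X Y]|[X Y]]; destruct (classic (A h));
      destruct (classic (A (star h))); tauto.
  - intros h k Hh Hk Hle. unfold flip in Hh, Hk.
    destruct Hh as [[Xh Ah]|[Xh Ah]]; destruct Hk as [[Xk Ak]|[Xk Ak]].
    + exact (U2 h k Xh Xk Hle).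
    + apply Ah. exact (Adown h (star k) Xh Hle Ak).
    + apply Ak. apply (Adown k (star h) Xk); [|exact Ah].
      pose proof (star_rev H _ _ Hle) as Hle'. rewrite star_invol in Hle'. exact Hle'.
    + apply (Anc _ _ Ah Ak). rewrite star_invol. exact Hle.
Qed.

Lemma flip_chain xi A (c : nat -> H) N d : discrete H -> ultrafilter H xi ->
  (forall n, lt H (c (S n)) (c n)) -> (forall n, xi (c n)) ->
  (forall h, A h -> xi h /\ le h (c (S N))) ->
  desc_chain_in H (flip xi A) d -> forall m, xi (d m) /\ ~ A (d m).
Proof.
  intros Hdisc U Hc Xc HA [Hd Hin].
  assert (Hall: forall m, xi (d m)).
  { intro m0. apply NNPP. intro Nx.
    assert (Hk: forall k, ~ xi (d (k + m0))).
    { intros k Xk. apply (proj2 U (d (k+m0)) (star (d m0)) Xk (uf_star' _ _ U Nx)).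
      rewrite star_invol. apply chain_le; auto. }
    assert (He: forall k, xi (star (d (k + m0))) /\ A (star (d (k + m0)))).
    { intro k. destruct (Hin (k + m0)) as [[X _]|Y]; [exfalso; exact (Hk k X)|exact Y]. }
    destruct (HA _ (proj2 (He 0))) as [Xe0 Le0].
    destruct (Hdisc (star (d (0 + m0))) (c (S N))) as [l Hl].
    { apply (proper_below xi c N _ U Hc Xe0 Le0). }
    { apply (proper_below xi c N _ U Hc (Xc _) (le_refl H _)). }
    apply (chain_not_in_list (fun k => d (k + m0)) (map star l)).
    - intro n. exact (Hd (n + m0)).
    - intro n. cbv beta. rewrite <- (star_invol H (d (n + m0))). apply in_map.
      apply Hl. split.
      + apply star_rev. apply chain_le; auto.
      + apply (proj2 (HA _ (proj2 (He n)))). }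
  intro m. split; [apply Hall|].
  destruct (Hin m) as [[_ Y]|[Y _]]; [exact Y|].
  exfalso. exact (uf_star xi _ U (Hall m) Y).
Qed.

Lemma dom_trans (a b c : nat -> H) : dominates H a b -> dominates H b c -> dominates H a c.
Proof.
  intros D1 D2 m. destruct (D2 m) as [n Hn]. destruct (D1 n) as [p Hp].
  exists p. eapply le_trans; eauto.
Qed.

Lemma undominated (r : nat -> nat -> H) n :
  (forall i j, i < n -> j < n -> i <> j -> ~ chain_equiv H (r i) (r j)) -> 0 < n ->
  exists k, k < n /\ forall i, i < n -> i <> k -> ~ dominates H (r i) (r k).
Proof.
  induction n as [|n IH]; intros Hneq Hpos. lia.
  destruct n as [|n].
  - exists 0. split. lia. intros i Hi Hik. lia.
  - destruct IH as [k [Hk Hund]]. { intros i j Hi Hj; apply Hneq; lia. } lia.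
    destruct (classic (dominates H (r (S n)) (r k))) as [D|D].
    + exists (S n). split. lia. intros i Hi Hin Di.
      assert (i = k \/ i <> k) as [->|Hik] by lia.
      * apply (Hneq k (S n)); try lia. split; assumption.
      * apply (Hund i); try lia. eapply dom_trans; eauto.
    + exists k. split. lia. intros i Hi Hik.
      assert (i = S n \/ i < S n) as [->|Hi'] by lia. exact D. apply Hund; lia.
Qed.

Lemma find_N (r : nat -> nat -> H) k (Hc: forall n, lt H (r k (S n)) (r k n)) n0 :
  (forall i, i < n0 -> i <> k -> ~ dominates H (r i) (r k)) ->
  exists N, forall i, i < n0 -> i <> k -> forall n, ~ le (r i n) (r k N).
Proof.
  induction n0; intros Hund.
  - exists 0. intros; lia.
  - destruct IHn0 as [N HN]. { intros; apply Hund; lia. }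
    destruct (classic (n0 = k)) as [E|E].
    + exists N. intros i Hi Hik. assert (i < n0) by lia. auto.
    + assert (Hm: exists m, forall n, ~ le (r n0 n) (r k m)).
      { apply NNPP; intro Hn. apply (Hund n0); [lia|exact E|]. intro m.
        apply NNPP; intro Hm. apply Hn. exists m. intros n Hle. apply Hm. exists n. exact Hle. }
      destruct Hm as [m Hm]. exists (Nat.max N m). intros i Hi Hik n Hle.
      assert (i = n0 \/ i < n0) as [->|Hi'] by lia.
      * apply (Hm n). eapply le_trans; [exact Hle|]. apply (chain_mono (r k) Hc); lia.
      * apply (HN i Hi' Hik n). eapply le_trans; [exact Hle|]. apply (chain_mono (r k) Hc); lia.
Qed.

Lemma finite_union (F : list H) (P : H -> H -> Prop) :
  (forall f, exists l, forall h, P f h -> In h l) ->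
  exists l, forall h, (exists f, In f F /\ P f h) -> In h l.
Proof.
  intros Hf. induction F as [|f F IH].
  - exists nil. intros h [f [[] _]].
  - destruct IH as [l2 H2]. destruct (Hf f) as [l1 H1]. exists (l1 ++ l2).
    intros h [g [[<-|Hg] Hp]]; apply in_or_app; [left|right]; auto.
    apply H2. exists g; auto.
Qed.

End Proof.

Theorem mainTheorem17 (H : PocSet) :
  discrete H -> omega_dimensional H ->
  forall (xi : H -> Prop) (delta : nat),
    ultrafilter H xi -> codim H xi delta -> 0 < delta ->
    exists xi1 : H -> Prop,
      ultrafilter H xi1 /\
      re_lt H (uclass H xi1) (uclass H xi) /\
      codim H xi1 (delta - 1).
Proof.
  intros Hdisc _ xi delta U [r [Rch [Rneq Rcov]]] Hpos.
  destruct (undominated H r delta Rneq Hpos) as [k [Hk Hund]].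
  destruct (Rch k Hk) as [Hc Xc].
  destruct (find_N H r k Hc delta Hund) as [N HN].
  set (c := r k) in *.
  set (A := fun h => xi h /\ le h (c (S N))).
  assert (HA : forall h, A h -> xi h /\ le h (c (S N))) by (intros; assumption).
  assert (Adown: forall g h, xi g -> le g h -> A h -> A g).
  { intros g h Xg Hgh [_ Hh]. split; auto. eapply le_trans; eauto. }
  assert (Anc: forall h k', A h -> A k' -> ~ le (star h) k').
  { intros h k' [_ Hh] [_ Hk']. apply (nc_below H xi c N h k' U Hc Xc Hh Hk'). }
  assert (U1 : ultrafilter H (flip H xi A)).
  { apply flip_uf; auto. intros h [X _]; exact X. }
  exists (flip H xi A). split; [exact U1|split].
  - assert (Uxx: uclass H xi xi).
    { split; auto. exists nil. intros h [[? ?]|[? ?]]; contradiction. }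
    split.
    + exists xi. split; [exact Uxx|]. split; [exact U|]. intro F.
      set (B := fun h => A h /\ forall f, In f F ->
                  (A f -> ~ le f h) /\ (A (star f) -> ~ le (star f) h)).
      assert (Bsub: forall x, B x -> A x) by (intros x [Ax _]; exact Ax).
      exists (flip H xi B). split; [split|].
      * apply flip_uf; [exact U| | |].
        -- intros h [[X _] _]; exact X.
        -- intros g h Xg Hgh [Ah Hh]. split. apply (Adown g h Xg Hgh Ah).
           intros f Hf. destruct (Hh f Hf) as [H1 H2].
           split; intros Af Hle; [apply (H1 Af)|apply (H2 Af)]; eapply le_trans; eauto.
        -- intros h k' [Ah _] [Ak _]. apply Anc; auto.
      * set (P := fun f h => (A f /\ le f h /\ le h (c (S N))) \/
                             (A (star f) /\ le (star f) h /\ le h (c (S N)))).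
        assert (Gfin: forall g, exists l, forall h, A g /\ le g h /\ le h (c (S N)) -> In h l).
        { intros g. destruct (classic (A g)) as [Ag|nAg].
          - destruct (Hdisc g (c (S N))) as [l Hl].
            + apply (proper_below H xi c N g U Hc (proj1 Ag) (proj2 Ag)).
            + apply (proper_below H xi c N (c (S N)) U Hc (Xc _) (le_refl H _)).
            + exists l. intros h (_ & H1 & H2). apply Hl; split; auto.
          - exists nil. intros h (Ag & _). contradiction. }
        assert (Pfin: forall f, exists l, forall h, P f h -> In h l).
        { intros f. destruct (Gfin f) as [l1 H1], (Gfin (star f)) as [l2 H2].
          exists (l1 ++ l2). intros h [P1|P2]; apply in_or_app; [left|right]; auto. }
        destruct (finite_union H F P Pfin) as [L HL].
        assert (HE: forall x, A x -> ~ B x -> In x L).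
        { intros x Ax nB. apply HL. apply NNPP; intro Hn. apply nB. split; [exact Ax|].
          intros f Hf. split; intros Af Hle; apply Hn; exists f; split; try exact Hf.
          - left. split; [exact Af|split; [exact Hle|exact (proj2 Ax)]].
          - right. split; [exact Af|split; [exact Hle|exact (proj2 Ax)]]. }
        exists (L ++ map star L). intros h Hd. unfold flip in Hd.
        destruct (proj1 U h) as [[X Y]|[X Y]].
        -- apply in_or_app; left. apply HE.
           ++ pose proof (Bsub h). tauto.
           ++ pose proof (Bsub h). pose proof (Bsub (star h)). tauto.
        -- apply in_or_app; right. rewrite <- (star_invol H h). apply in_map.
           apply HE.
           ++ pose proof (Bsub (star h)). tauto.
           ++ pose proof (Bsub h). pose proof (Bsub (star h)). tauto.
      * intros f Hf. unfold flip.
        assert (N1: ~ B f).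
        { intros [Af Hb]. destruct (Hb f Hf) as [H1 _]. exact (H1 Af (le_refl H f)). }
        assert (N2: ~ B (star f)).
        { intros [Af Hb]. destruct (Hb f Hf) as [_ H2]. exact (H2 Af (le_refl H _)). }
        tauto.
    + intro Hsame. destruct (proj2 (Hsame xi) Uxx) as [_ [L HL]].
      apply (chain_not_in_list H (fun n => c (n + S N)) L).
      * intro n. exact (Hc (n + S N)).
      * intro n. apply HL. left. split; [apply Xc|]. intro Fl.
        destruct Fl as [[_ nA]|[Xs _]].
        -- apply nA. split; [apply Xc|]. apply chain_le; auto.
        -- exact (uf_star H xi _ U (Xc _) Xs).
  - exists (fun i => r (if i <? k then i else S i)).
    assert (Hsk: forall i, i < delta - 1 ->
               (if i <? k then i else S i) < delta /\ (if i <? k then i else S i) <> k).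
    { intros i Hi. destruct (Nat.ltb_spec i k); lia. }
    assert (Hnot: forall j, j < delta -> j <> k -> forall n, xi (r j n) /\ ~ A (r j n)).
    { intros j Hj Hjk n. split. apply (proj2 (Rch j Hj)). intros [_ Hle].
      apply (HN j Hj Hjk n). eapply le_trans; [exact Hle|].
      apply (chain_mono H c Hc); lia. }
    split; [|split].
    + intros i Hi. destruct (Hsk i Hi) as [H1 H2]. split.
      * apply (proj1 (Rch _ H1)).
      * intro n. unfold flip. left. apply Hnot; auto.
    + intros i j Hi Hj Hij. destruct (Hsk i Hi), (Hsk j Hj). apply Rneq; auto.
      destruct (Nat.ltb_spec i k), (Nat.ltb_spec j k); lia.
    + intros d Hd. pose proof (flip_chain H xi A c N d Hdisc U Hc Xc HA Hd) as Hdx.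
      destruct (Rcov d) as [j [Hj Hdj]].
      { split. apply (proj1 Hd). intro n; apply (Hdx n). }
      assert (Hjk: j <> k).
      { intro E; subst j. destruct Hdj as [D _]. destruct (D (S N)) as [n Hn].
        apply (proj2 (Hdx n)). split. apply (proj1 (Hdx n)). exact Hn. }
      destruct (Nat.ltb_spec j k) as [Hl|Hl].
      * exists j. split. lia. replace (j <? k) with true by (symmetry; apply Nat.ltb_lt; lia).
        exact Hdj.
      * exists (j - 1). split. lia.
        replace (j - 1 <? k) with false by (symmetry; apply Nat.ltb_ge; lia).
        replace (S (j-1)) with j by lia. exact Hdj.
Qed.
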